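(* Assume $\mathsf{X}=\mathsf{Y}$ is finite and $D\ge0$ with $\mathcal{G}(D)\neq\emptyset$. Let $P^*_{X,Y}\in\mathcal{G}(D)$ attain $I(\mu\|\psi,D)=\min\{I(X;Y):P_{X,Y}\in\mathcal{G}(D)\}$, and let $H^*(Y|X)$ be the conditional entropy under $P^*_{X,Y}$. Then for every $R_c\ge H^*(Y|X)$, $$\min\{R:(R,R_c)\in\mathcal{L}(D)\}=I(\mu\|\psi,D),$$ and $\{R:(R,R_c)\in\mathcal{L}(D)\}=\{R: R\ge I(\mu\|\psi,D)\}$, which is also the set of $R$ for which $(R,R_c')\in\mathcal{L}(D)$ for some $R_c'$ arbitrarily large.
   Context: $\mathsf{X}=\mathsf{Y}$ finite, $\rho$ a distortion measure, $\mu,\psi$ distributions on $\mathsf{X}$. $\mathcal{G}(D):=\{P_{X,Y}: P_X=\mu,\ P_Y=\psi,\ \mathbb{E}[\rho(X,Y)]\le D\}$. $\mathcal{M}(D):=\{P_{X,Y,U}: P_X=\mu,\ P_Y=\psi,\ \mathbb{E}[\rho(X,Y)]\le D,\ X-U-Y\text{ Markov},\ |\mathsf{U}|\le|\mathsf{X}|+|\mathsf{Y}|+1\}$, and $\mathcal{L}(D):=\{(R,R_c)\in\mathbb{R}^2:\exists P_{X,Y,U}\in\mathcal{M}(D)\text{ with } R\ge I(X;U),\ R+R_c\ge I(Y;U)\}$. *)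

(* Defs.v *)
From mathcomp Require Import all_boot.
From Stdlib Require Import Reals.
Set Implicit Arguments. Unset Strict Implicit. Unset Printing Implicit Defensive.

Local Open Scope R_scope.

Definition rsum (A : finType) (f : A -> R) : R := \big[Rplus/0]_(a : A) f a.

Definition is_pmf (A : finType) (p : A -> R) : Prop :=
  (forall a, 0 <= p a) /\ rsum p = 1.

Definition plogq (p q : R) : R :=
  if Rlt_dec 0 p then p * ln (p / q) else 0.

Definition marg1 (A B : finType) (P : A -> B -> R) (a : A) : R := rsum (fun b => P a b).
Definition marg2 (A B : finType) (P : A -> B -> R) (b : B) : R := rsum (fun a => P a b).

Definition mutinfo (A B : finType) (P : A -> B -> R) : R :=
  rsum (fun a => rsum (fun b => plogq (P a b) (marg1 P a * marg2 P b))).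

Definition condent (A B : finType) (P : A -> B -> R) : R :=
  - rsum (fun a => rsum (fun b => plogq (P a b) (marg1 P a))).

Definition expdist (T : finType) (rho : T -> T -> R) (P : T -> T -> R) : R :=
  rsum (fun x => rsum (fun y => P x y * rho x y)).

Definition inG (T : finType) (rho : T -> T -> R) (mu psi : T -> R) (D : R)
  (P : T -> T -> R) : Prop :=
  is_pmf (fun xy : T * T => P xy.1 xy.2) /\
  (forall x, marg1 P x = mu x) /\ (forall y, marg2 P y = psi y) /\
  expdist rho P <= D.

Definition mXU (T U : finType) (Q : T -> U -> T -> R) (x : T) (u : U) : R :=
  rsum (fun y => Q x u y).
Definition mUY (T U : finType) (Q : T -> U -> T -> R) (u : U) (y : T) : R :=
  rsum (fun x => Q x u y).
Definition mXY (T U : finType) (Q : T -> U -> T -> R) (x : T) (y : T) : R :=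
  rsum (fun u => Q x u y).
Definition mU (T U : finType) (Q : T -> U -> T -> R) (u : U) : R :=
  rsum (fun x => rsum (fun y => Q x u y)).

Definition markov (T U : finType) (Q : T -> U -> T -> R) : Prop :=
  forall x u y, Q x u y * mU Q u = mXU Q x u * mUY Q u y.

(* M(D), with U = 'I_k and k = |U| <= |X| + |Y| + 1 *)
Definition inM (T : finType) (rho : T -> T -> R) (mu psi : T -> R) (D : R)
  (k : nat) (Q : T -> 'I_k -> T -> R) : Prop :=
  is_true (leq k (addn (addn #|T| #|T|) 1)) /\
  is_pmf (fun t : T * 'I_k * T => Q t.1.1 t.1.2 t.2) /\
  inG rho mu psi D (mXY Q) /\
  markov Q.

Definition inL (T : finType) (rho : T -> T -> R) (mu psi : T -> R) (D : R)
  (R0 Rc : R) : Prop :=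
  exists (k : nat) (Q : T -> 'I_k -> T -> R),
    inM rho mu psi D Q /\
    mutinfo (mXU Q) <= R0 /\
    mutinfo (fun (y : T) (u : 'I_k) => mUY Q u y) <= R0 + Rc.

(* Main.v *)
Require Import Defs.
From HB Require Import structures.
From mathcomp Require Import all_boot.
From Stdlib Require Import Reals Lra FunctionalExtensionality.
Local Open Scope R_scope.
Set Implicit Arguments.
Unset Strict Implicit.

HB.instance Definition _ := Monoid.isComLaw.Build R 0 Rplus (fun a b c => esym (Rplus_assoc a b c)) Rplus_comm Rplus_0_l.

Lemma rsumD (A : finType) (f g : A -> R) :
  rsum (fun a => f a + g a) = rsum f + rsum g.
Proof. by rewrite /rsum big_split. Qed.

Lemma rsum0 (A : finType) : rsum (fun _ : A => 0) = 0.
Proof. by rewrite /rsum big1. Qed.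

Lemma rsum_mulr (A : finType) (f : A -> R) c :
  rsum (fun a => f a * c) = rsum f * c.
Proof.
rewrite /rsum; elim/big_rec2: _ => [|i y1 y2 _ ->]; lra.
Qed.

Lemma rsum_le (A : finType) (f g : A -> R) :
  (forall a, f a <= g a) -> rsum f <= rsum g.
Proof.
move=> H; rewrite /rsum; elim/big_rec2: _ => [|i y1 y2 _ Hy]; first lra.
by apply Rplus_le_compat.
Qed.

Lemma rsum_ge0 (A : finType) (f : A -> R) :
  (forall a, 0 <= f a) -> 0 <= rsum f.
Proof. move=> H; rewrite -(rsum0 A); exact: rsum_le. Qed.

Lemma rsum_ge_term (A : finType) (f : A -> R) a :
  (forall a, 0 <= f a) -> f a <= rsum f.
Proof.
move=> H; rewrite /rsum (bigD1 a) //=.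
have : 0 <= \big[Rplus/0]_(i | i != a) f i.
  elim/big_rec: _ => [|i y _ Hy]; first lra.
  by have := H i; lra.
lra.
Qed.

Lemma rsum_ext (A : finType) (f g : A -> R) :
  (forall a, f a = g a) -> rsum f = rsum g.
Proof. by move=> H; rewrite /rsum; apply: eq_bigr => i _. Qed.

Lemma rsum_exch (A B : finType) (F : A -> B -> R) :
  rsum (fun a => rsum (fun b => F a b)) = rsum (fun b => rsum (fun a => F a b)).
Proof. by rewrite /rsum exchange_big. Qed.

Lemma rsum_pair (A B : finType) (F : A -> B -> R) :
  rsum (fun p : A * B => F p.1 p.2) = rsum (fun a => rsum (fun b => F a b)).
Proof. by rewrite /rsum pair_big. Qed.

Lemma plogq_sum (A : finType) (f : A -> R) K :
  (forall a, 0 <= f a) ->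
  plogq (rsum f) K = rsum (fun a => f a * ln (rsum f / K)).
Proof.
move=> H; rewrite /plogq; case: Rlt_dec => h /=.
  by rewrite rsum_mulr.
have h0 : rsum f = 0 by have := @rsum_ge0 _ f H; lra.
transitivity (rsum (fun _ : A => 0)); first by rewrite rsum0.
apply: rsum_ext => a.
have := @rsum_ge_term _ f a H; have := H a; rewrite h0 => h1 h2.
have -> : f a = 0 by lra. lra.
Qed.

Lemma ln_le (z : R) : 0 < z -> ln z <= z - 1.
Proof. move=> hz; have := exp_ineq1_le (ln z); rewrite exp_ln //; lra. Qed.

Lemma term_ineq Q a b c m px qy :
 0 <= Q -> 0 <= b -> 0 <= c -> c <= qy ->
 (0 < Q -> Q <= a /\ Q <= b /\ Q <= c /\ a <= m /\ a <= px) ->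
 Q * m = a * b ->
 Q * ln (c/(px*qy)) + (Q - b*c/qy) <= Q * ln (a/(px*m)).
Proof.
move=> hQ hb hc hcq hpos hM.
have hiq : 0 <= / qy.
  case: (Rle_lt_or_eq_dec 0 qy ltac:(lra)) => h.
    by apply: Rlt_le; apply: Rinv_0_lt_compat.
  by rewrite -h Rinv_0; lra.
case: (Rle_lt_or_eq_dec 0 Q hQ) => hQ'; last first.
  rewrite -hQ' !Rmult_0_l; unfold Rdiv.
  have : 0 <= b * c * / qy by apply: Rmult_le_pos => //; apply: Rmult_le_pos.
  lra.
have [ha [hb' [hc' [ham hap]]]] := hpos hQ'.
have a0 : 0 < a by lra. have b0 : 0 < b by lra. have c0 : 0 < c by lra.
have m0 : 0 < m by lra. have p0 : 0 < px by lra. have q0 : 0 < qy by lra.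
have e1 : ln (a/(px*m)) = ln a - ln px - ln m.
  unfold Rdiv; rewrite ln_mult //; last by apply: Rinv_0_lt_compat; nra.
  rewrite ln_Rinv; last by nra.
  rewrite ln_mult //; lra.
have e2 : ln (c/(px*qy)) = ln c - ln px - ln qy.
  unfold Rdiv; rewrite ln_mult //; last by apply: Rinv_0_lt_compat; nra.
  rewrite ln_Rinv; last by nra.
  rewrite ln_mult //; lra.
set r := b * c / qy.
have r0 : 0 < r by rewrite /r; unfold Rdiv; apply: Rmult_lt_0_compat; [nra | apply: Rinv_0_lt_compat].
have e3 : ln r = ln b + ln c - ln qy.
  rewrite /r; unfold Rdiv; rewrite ln_mult; last by apply: Rinv_0_lt_compat.
  2: nra. rewrite ln_mult // ln_Rinv //; lra.
have e4 : ln Q + ln m = ln a + ln b by rewrite -!ln_mult // hM.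
set z := r / Q.
have z0 : 0 < z by rewrite /z; unfold Rdiv; apply: Rmult_lt_0_compat => //; apply: Rinv_0_lt_compat.
have e5 : ln z = ln r - ln Q by rewrite /z; unfold Rdiv; rewrite ln_mult //; [rewrite ln_Rinv //; lra | apply: Rinv_0_lt_compat =>//].
have e6 : r = Q * z by rewrite /z; field; lra.
have hz := @ln_le z z0.
have : 0 <= Q * (z - 1 - ln z) by apply: Rmult_le_pos; lra.
rewrite e6 in e3 e5.
have La : ln a = ln m + ln c - ln qy - ln z by lra.
rewrite e1 e2 e6 La.
move=> hh.
match goal with |- Rle ?L ?Rr => have -> : Rr = L + Q * (z - 1 - ln z) by ring end.
lra.
Qed.

Lemma rsumB (A : finType) (f g : A -> R) :
  rsum (fun a => f a - g a) = rsum f - rsum g.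
Proof.
have := rsumD (fun a => f a - g a) g.
rewrite ((@rsum_ext _ (fun a => f a - g a + g a) f)); first lra.
move=> a; ring.
Qed.

Lemma rsum_comb (A : finType) (f g h : A -> R) :
  rsum (fun a => f a + (g a - h a)) = rsum f + (rsum g - rsum h).
Proof. by rewrite rsumD rsumB. Qed.

Lemma sum3 (T U : finType) (Q : T -> U -> T -> R) :
  rsum (fun t : T * U * T => Q t.1.1 t.1.2 t.2) =
  rsum (fun x => rsum (fun u => rsum (fun y => Q x u y))).
Proof.
rewrite (@rsum_pair (T * U)%type T (fun p y => Q p.1 p.2 y)).
exact: (@rsum_pair T U (fun x u => rsum (fun y => Q x u y))).
Qed.

Lemma dpi (T U : finType) (Q : T -> U -> T -> R) :
  is_pmf (fun t : T * U * T => Q t.1.1 t.1.2 t.2) -> markov Q ->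
  mutinfo (mXY Q) <= mutinfo (mXU Q).
Proof.
move=> [h0 h1] hM.
have hQ : forall x u y, 0 <= Q x u y by move=> x u y; exact: (h0 (x, u, y)).
rewrite sum3 in h1.
have hxu : forall x u, 0 <= mXU Q x u by move=> *; apply: rsum_ge0.
have hxy : forall x y, 0 <= mXY Q x y by move=> *; apply: rsum_ge0.
have huy : forall u y, 0 <= mUY Q u y by move=> *; apply: rsum_ge0.
have hpx : forall x, marg1 (mXY Q) x = marg1 (mXU Q) x.
  by move=> x; rewrite /marg1 /mXY /mXU rsum_exch.
pose A x u := mXU Q x u / (marg1 (mXU Q) x * marg2 (mXU Q) u).
pose B x y := mXY Q x y / (marg1 (mXU Q) x * marg2 (mXY Q) y).
pose r x u y := mUY Q u y * mXY Q x y / marg2 (mXY Q) y.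
have E1 : mutinfo (mXU Q) = rsum (fun x => rsum (fun u => rsum (fun y => Q x u y * ln (A x u)))).
  rewrite /mutinfo; apply: rsum_ext => x; apply: rsum_ext => u.
  by rewrite /A {1}/mXU plogq_sum.
have E2 : mutinfo (mXY Q) = rsum (fun x => rsum (fun u => rsum (fun y => Q x u y * ln (B x y)))).
  rewrite /mutinfo; apply: rsum_ext => x; rewrite rsum_exch; apply: rsum_ext => y.
  by rewrite /B -hpx {1}/mXY plogq_sum.
have Er : rsum (fun x => rsum (fun u => rsum (fun y => r x u y))) = 1.
  transitivity (rsum (fun y => rsum (fun x => rsum (fun u => r x u y)))).
    rewrite [RHS]rsum_exch; apply: rsum_ext => x; exact: rsum_exch.
  transitivity (rsum (fun y => marg2 (mXY Q) y)); last first.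
    rewrite /marg2 /mXY rsum_exch -h1; apply: rsum_ext => x; exact: rsum_exch.
  apply: rsum_ext => y.
  set qy := marg2 (mXY Q) y.
  have hS : rsum (fun u => mUY Q u y) = qy.
    by rewrite /qy /marg2 /mXY /mUY rsum_exch.
  transitivity (rsum (fun x => mXY Q x y * (qy * / qy))).
    apply: rsum_ext => x.
    rewrite ((@rsum_ext _ (fun u => r x u y) (fun u => mUY Q u y * (mXY Q x y / qy)))).
      rewrite rsum_mulr hS; unfold Rdiv; ring.
    move=> u; rewrite /r /qy; unfold Rdiv; ring.
  rewrite rsum_mulr -/(marg2 (mXY Q) y) -/qy.
  case: (Req_dec qy 0) => hq; first by rewrite hq; ring.
  by field.
have Hle : rsum (fun x => rsum (fun u => rsum (fun y => Q x u y * ln (B x y) + (Q x u y - r x u y))))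
   <= mutinfo (mXU Q).
  rewrite E1; apply: rsum_le => x; apply: rsum_le => u; apply: rsum_le => y.
  apply: term_ineq => //.
  - exact: (@rsum_ge_term _ (fun x => mXY Q x y) x (fun x => hxy x y)).
  - move=> hp; split; first exact: (@rsum_ge_term _ (fun y => Q x u y) y (fun y => hQ x u y)).
    split; first exact: (@rsum_ge_term _ (fun x => Q x u y) x (fun x => hQ x u y)).
    split; first exact: (@rsum_ge_term _ (fun u => Q x u y) u (fun u => hQ x u y)).
    split; first exact: (@rsum_ge_term _ (fun x => mXU Q x u) x (fun x => hxu x u)).
    exact: (@rsum_ge_term _ (fun u => mXU Q x u) u (fun u => hxu x u)).
have Esplit : forall (F G H : T -> U -> T -> R),
  rsum (fun x => rsum (fun u => rsum (fun y => F x u y + (G x u y - H x u y)))) =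
  rsum (fun x => rsum (fun u => rsum (fun y => F x u y))) +
  (rsum (fun x => rsum (fun u => rsum (fun y => G x u y))) -
   rsum (fun x => rsum (fun u => rsum (fun y => H x u y)))).
  move=> F G H.
  rewrite -rsum_comb; apply: rsum_ext => x.
  rewrite -rsum_comb; apply: rsum_ext => u.
  by rewrite -rsum_comb.
rewrite Esplit -E2 h1 Er in Hle; lra.
Qed.

Lemma rsum_reidx (T : finType) (f : T -> R) :
  rsum (fun u : 'I_#|T| => f (enum_val u)) = rsum f.
Proof.
symmetry; rewrite /rsum (reindex (@enum_val T (mem T))) //.
exact: onW_bij (enum_val_bij T).
Qed.

Lemma sum_ind (A : finType) (a : A) (f : A -> R) :
  rsum (fun b => if a == b then f b else 0) = f a.
Proof.
rewrite /rsum (bigD1 a) //= eqxx big1 ?Rplus_0_r // => b hb.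
by rewrite eq_sym (negbTE hb).
Qed.

Lemma plogq0 q : plogq 0 q = 0.
Proof. by rewrite /plogq; case: Rlt_dec => h //; lra. Qed.

Lemma plogq_diff p a b : 0 <= p -> (0 < p -> 0 < a /\ 0 < b) ->
  plogq p (a * b) - plogq p a = p * - ln b.
Proof.
move=> hp hpos; rewrite /plogq; case: Rlt_dec => h /=; last first.
  have -> : p = 0 by lra. ring.
have [ha hb] := hpos h.
unfold Rdiv; rewrite !ln_mult //; try (apply: Rinv_0_lt_compat; nra).
rewrite !ln_Rinv //; try nra. rewrite ln_mult //; ring.
Qed.

Lemma plogq_ent m : 0 <= m -> plogq m (m * m) = m * - ln m.
Proof.
move=> hm; rewrite /plogq; case: Rlt_dec => h /=; last first.
  have -> : m = 0 by lra. ring.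
have -> : m / (m * m) = / m by field; lra.
by rewrite ln_Rinv.
Qed.

Lemma construct (T : finType) (rho : T -> T -> R) (mu psi : T -> R) (D : R)
  (P : T -> T -> R) Rc :
  inG rho mu psi D P -> condent P <= Rc -> inL rho mu psi D (mutinfo P) Rc.
Proof.
move=> hG hc.
have hP : forall x y, 0 <= P x y by move=> x y; exact: (hG.1.1 (x, y)).
have hsP : rsum (fun x => rsum (fun y => P x y)) = 1.
  by rewrite -hG.1.2 (@rsum_pair T T P).
pose Q := fun x (u : 'I_#|T|) y => if enum_rank y == u then P x y else 0.
have er : forall (y : T) (u : 'I_#|T|), (enum_rank y == u) = (enum_val u == y).
  by move=> y u; apply/eqP/eqP => [<-|<-]; [exact: enum_rankK | exact: enum_valK].
have hXY : mXY Q = P.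
  apply: functional_extensionality => x; apply: functional_extensionality => y.
  exact: (@sum_ind _ (enum_rank y) (fun _ => P x y)).
have hXU : forall x u, mXU Q x u = P x (enum_val u).
  move=> x u; rewrite /mXU /Q.
  rewrite (@rsum_ext _ _ (fun y => if enum_val u == y then P x y else 0)); last by move=> y; rewrite er.
  exact: sum_ind.
have hUY : forall u y, mUY Q u y = if enum_rank y == u then marg2 P y else 0.
  move=> u y; rewrite /mUY /Q; case: eqP => _ //; exact: rsum0.
have hU : forall u, mU Q u = marg2 P (enum_val u).
  by move=> u; rewrite /mU /marg2; apply: rsum_ext => x; rewrite -hXU.
exists #|T|, Q; split; [split; [|split; [|split]] | split].
- by rewrite -addnA leq_addr.
- split.
    by move=> [[x u] y]; rewrite /Q /=; case: eqP => _ //; lra.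
  rewrite sum3 -hsP; apply: rsum_ext => x.
  rewrite -[RHS]rsum_reidx; apply: rsum_ext => u; exact: hXU.
- by rewrite hXY.
- move=> x u y; rewrite hU hXU hUY /Q er; case: eqP => [<-|_]; ring.
- apply: Req_le; rewrite /mutinfo; apply: rsum_ext => x.
  rewrite -[RHS]rsum_reidx; apply: rsum_ext => u.
  rewrite hXU; congr (plogq _ (_ * _)).
    rewrite /marg1 -[RHS]rsum_reidx; apply: rsum_ext => v; exact: hXU.
  exact: hU.
- have hm1 : forall y, marg1 (fun y u => mUY Q u y) y = marg2 P y.
    move=> y; rewrite /marg1 (@rsum_ext _ _ _ (fun u => hUY u y)).
    exact: (@sum_ind _ (enum_rank y) (fun _ => marg2 P y)).
  have hm2 : forall u, marg2 (fun y u => mUY Q u y) u = marg2 P (enum_val u).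
    move=> u; rewrite /marg2 (@rsum_ext _ _ _ (fun y => hUY u y)).
    rewrite (@rsum_ext _ _ (fun y => if enum_val u == y then marg2 P y else 0)); last by move=> y; rewrite er.
    exact: sum_ind.
  have Hm : mutinfo (fun y u => mUY Q u y) = rsum (fun y => marg2 P y * - ln (marg2 P y)).
    rewrite /mutinfo; apply: rsum_ext => y.
    rewrite (@rsum_ext _ _ (fun u => if enum_rank y == u then plogq (marg2 P y) (marg2 P y * marg2 P y) else 0)).
      rewrite sum_ind; apply: plogq_ent; apply: rsum_ge0 => x; exact: hP.
    move=> u; rewrite hm1 hm2 hUY; case: eqP => [<-|_]; last exact: plogq0.
    by rewrite enum_rankK.
  have Hent : mutinfo P + condent P = rsum (fun y => marg2 P y * - ln (marg2 P y)).
    rewrite /condent.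
    have -> : forall a b, a + - b = a - b by move=> a b; ring.
    rewrite /mutinfo -rsumB.
    transitivity (rsum (fun x => rsum (fun y => P x y * - ln (marg2 P y)))).
      apply: rsum_ext => x; rewrite -rsumB; apply: rsum_ext => y; apply: plogq_diff => // hp.
      split; apply: (Rlt_le_trans _ _ _ hp).
        exact: (@rsum_ge_term _ (fun y => P x y) y (fun y => hP x y)).
      exact: (@rsum_ge_term _ (fun x => P x y) x (fun x => hP x y)).
    rewrite rsum_exch; apply: rsum_ext => y; exact: rsum_mulr.
  rewrite Hm -Hent; lra.
Qed.

Unset Implicit Arguments.
Set Strict Implicit.

Theorem mainTheorem8 (T : finType) (rho : T -> T -> R) (mu psi : T -> R) (D : R)
  (Pstar : T -> T -> R) :
  (forall x y, 0 <= rho x y) ->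
  is_pmf mu -> is_pmf psi ->
  0 <= D ->
  inG rho mu psi D Pstar ->
  (forall P, inG rho mu psi D P -> mutinfo Pstar <= mutinfo P) ->
  forall Rc, condent Pstar <= Rc ->
    (inL rho mu psi D (mutinfo Pstar) Rc /\
     (forall R0, inL rho mu psi D R0 Rc -> mutinfo Pstar <= R0)) /\
    (forall R0, inL rho mu psi D R0 Rc <-> mutinfo Pstar <= R0) /\
    (forall R0, (exists Rc', inL rho mu psi D R0 Rc') <-> mutinfo Pstar <= R0).
Proof.
move=> hrho hmu hpsi hD hG hmin Rc hRc.
have hL := construct hG hRc.
have low : forall R0 Rc', inL rho mu psi D R0 Rc' -> mutinfo Pstar <= R0.
  move=> R0 Rc' [k [Q [[_ [hpmf [hG' hM]]] [h1 h2]]]].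
  have := hmin _ hG'; have := dpi hpmf hM; lra.
have up : forall R0, mutinfo Pstar <= R0 -> inL rho mu psi D R0 Rc.
  move=> R0 h; case: hL => k [Q [hM [h1 h2]]]; exists k, Q; split => //; split; lra.
split; [split; [exact: hL | move=> R0; exact: low] | split].
- move=> R0; split; [exact: low | exact: up].
- move=> R0; split; [move=> [Rc' h]; exact: low h | move=> h; exists Rc; exact: up].
Qed.
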